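(* Let $\mu\ge 0$. Then, for $y>0$ and $x\ge 0$: (i) $\dfrac{\partial^2 Q_{\mu}(x,y)}{\partial x^2}\le 0$ whenever $0<y\le \mu+1$ and $x\ge 0$, with equality only for $x=0$, $y=\mu+1$; (ii) $\dfrac{\partial^2 Q_{\mu}(x,y)}{\partial x^2}<0$ whenever $x>y-\mu-\tfrac12$; (iii) $\dfrac{\partial^2 Q_{\mu}(x,y)}{\partial x^2}>0$ whenever $x<y-\mu-1$.
   Context: For real $\mu$, $x>0$, $y\ge 0$, the generalized Marcum $Q$-function is $Q_{\mu}(x,y)=x^{\frac12(1-\mu)}\int_y^{\infty} t^{\frac12(\mu-1)}e^{-t-x}I_{\mu-1}(2\sqrt{xt})\,dt$, where $I_\nu$ is the modified Bessel function of the first kind; at $x=0$ it is defined by continuity, $Q_\mu(0,y)=\Gamma(\mu,y)/\Gamma(\mu)$ (the regularized upper incomplete gamma function), and derivatives at $x=0$ are one-sided. *)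

(* Defs.v *)
From Stdlib Require Import Reals.
From Coquelicot Require Import Coquelicot.
Open Scope R_scope.

Definition Gamma (s : R) : R :=
  RInt_gen (fun t => Rpower t (s - 1) * exp (- t)) (at_right 0) (Rbar_locally p_infty).

Fixpoint poch (s : R) (n : nat) : R :=
  match n with
  | O => 1
  | S m => poch s m * (s + INR m)
  end.

(* Reciprocal Gamma 1/Gamma(s), an entire function: for n = max(0, ceil-ish(-s))
   with s + n > 0, 1/Gamma(s) = s(s+1)...(s+n-1) / Gamma(s+n).
   In particular it is 1/Gamma(s) for s > 0 and 0 at s = 0, -1, -2, ... *)
Definition rgamma (s : R) : R :=
  let n := Z.to_nat (up (- s)) in poch s n / Gamma (s + INR n).

Definition upper_gamma (a y : R) : R :=
  RInt_gen (fun t => Rpower t (a - 1) * exp (- t)) (at_point y) (Rbar_locally p_infty).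

Definition besselI (nu z : R) : R :=
  Series (fun k => Rpower (z / 2) (2 * INR k + nu) / INR (Factorial.fact k) * rgamma (INR k + nu + 1)).

(* Generalized Marcum Q-function, for x >= 0, y > 0; at x = 0 (continuity)
   Q_mu(0,y) = Gamma(mu,y)/Gamma(mu).  (Values at x < 0 are irrelevant.) *)
Definition MarcumQ (mu x y : R) : R :=
  if Rlt_dec 0 x then
    Rpower x ((1 - mu) / 2) *
    RInt_gen (fun t => Rpower t ((mu - 1) / 2) * exp (- t - x)
                          * besselI (mu - 1) (2 * sqrt (x * t)))
             (at_point y) (Rbar_locally p_infty)
  else upper_gamma mu y * rgamma mu.

Definition is_derive_nonneg (f : R -> R) (x l : R) : Prop :=
  filterlim (fun h => (f (x + h) - f x) / h)
    (within (fun h => h <> 0 /\ 0 <= x + h) (locally 0)) (locally l).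

(* Main.v *)
Require Import Defs.
From Stdlib Require Import Reals Lra Lia Factorial.
From Coquelicot Require Import Coquelicot.
Open Scope R_scope.

Lemma RInt_mono_b (f : R -> R) (a b b' : R) :
  (forall t, a <= t -> 0 <= f t) -> (forall b, a <= b -> ex_RInt f a b) ->
  a <= b -> b <= b' -> RInt f a b <= RInt f a b'.
Proof.
intros Hp Hex Hab Hbb.
rewrite <- (RInt_Chasles f a b b').
2: apply Hex; lra.
2: { apply (ex_RInt_Chasles_2 f a); [lra|apply Hex; lra]. }
assert (0 <= RInt f b b').
{ apply RInt_ge_0; [lra| |intros; apply Hp; lra].
  apply (ex_RInt_Chasles_2 f a); [lra|apply Hex; lra]. }
change (plus ?x ?y) with (x + y). lra.
Qed.

Lemma mono_inf (f : R -> R) (a M : R) :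
  (forall t, a <= t -> 0 <= f t) ->
  (forall b, a <= b -> ex_RInt f a b) ->
  (forall b, a <= b -> RInt f a b <= M) ->
  exists l, is_RInt_gen f (at_point a) (Rbar_locally p_infty) l /\
            (forall b, a <= b -> RInt f a b <= l).
Proof.
intros Hp Hex HM.
set (E := fun v => exists b, a <= b /\ v = RInt f a b).
assert (Hb : bound E). { exists M. intros v [b [Hb ->]]. now apply HM. }
assert (He : exists v, E v). { exists (RInt f a a). exists a. split; [lra|easy]. }
destruct (completeness E Hb He) as [l [Hub Hlub]].
exists l. split.
2: { intros b Hab. apply Hub. exists b. split; easy. }
intros P [eps HP].
assert (Hex0 : exists b0, a <= b0 /\ l - eps < RInt f a b0).
{ apply Classical_Prop.NNPP. intros Hn.
  assert (is_upper_bound E (l - eps)).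
  { intros v [b [Hab ->]]. apply Rnot_lt_le. intros Hlt. apply Hn. exists b. split; easy. }
  specialize (Hlub _ H). destruct eps; simpl in *; lra. }
destruct Hex0 as [b0 [Hab0 Hb0]].
apply Filter_prod with (fun u => u = a) (fun v => b0 < v).
- reflexivity.
- exists b0. easy.
- intros u v -> Hv. simpl. exists (RInt f a v). split.
  + apply (RInt_correct f). apply Hex. lra.
  + apply HP. change (Rabs (RInt f a v - l) < eps).
    assert (RInt f a b0 <= RInt f a v) by (apply RInt_mono_b; auto; lra).
    assert (RInt f a v <= l) by (apply Hub; exists v; split; [lra|easy]).
    apply Rabs_def1; lra.
Qed.

Lemma mono_0 (f : R -> R) (b M : R) :
  0 < b ->
  (forall t, 0 < t -> 0 <= f t) ->
  (forall e, 0 < e <= b -> ex_RInt f e b) ->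
  (forall e, 0 < e <= b -> RInt f e b <= M) ->
  exists l, is_RInt_gen f (at_right 0) (at_point b) l /\
            (forall e, 0 < e <= b -> RInt f e b <= l).
Proof.
intros Hbpos Hp Hex HM.
assert (Hmono : forall e e', 0 < e' <= e -> e <= b -> RInt f e b <= RInt f e' b).
{ intros e e' He' Heb.
  rewrite <- (RInt_Chasles f e' e b).
  2: { apply (ex_RInt_Chasles_1 f e' e b); [lra|apply Hex; lra]. }
  2: { apply (ex_RInt_Chasles_2 f e' e b); [lra|apply Hex; lra]. }
  assert (0 <= RInt f e' e).
  { apply RInt_ge_0; [lra| |intros; apply Hp; lra].
    apply (ex_RInt_Chasles_1 f e' e b); [lra|apply Hex; lra]. }
  change (plus ?x ?y) with (x + y). lra. }
set (E := fun v => exists e, 0 < e <= b /\ v = RInt f e b).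
assert (Hb : bound E). { exists M. intros v [e [He ->]]. now apply HM. }
assert (He : exists v, E v). { exists (RInt f b b). exists b. split; [lra|easy]. }
destruct (completeness E Hb He) as [l [Hub Hlub]].
exists l. split.
2: { intros e He'. apply Hub. exists e. split; easy. }
intros P [eps HP].
assert (Hex0 : exists e0, 0 < e0 <= b /\ l - eps < RInt f e0 b).
{ apply Classical_Prop.NNPP. intros Hn.
  assert (is_upper_bound E (l - eps)).
  { intros v [e [Hab ->]]. apply Rnot_lt_le. intros Hlt. apply Hn. exists e. split; easy. }
  specialize (Hlub _ H). destruct eps; simpl in *; lra. }
destruct Hex0 as [e0 [He0 Hb0]].
apply Filter_prod with (fun u => 0 < u < e0) (fun v => v = b).
- exists (mkposreal e0 (proj1 He0)). intros u Hu Hu0. split; auto.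
  change (Rabs (u - 0) < e0) in Hu. apply Rabs_def2 in Hu. lra.
- reflexivity.
- intros u v Hu ->. simpl. exists (RInt f u b). split.
  + apply (RInt_correct f). apply Hex. lra.
  + apply HP. change (Rabs (RInt f u b - l) < eps).
    assert (RInt f e0 b <= RInt f u b) by (apply Hmono; lra).
    assert (RInt f u b <= l) by (apply Hub; exists u; split; [lra|easy]).
    apply Rabs_def1; lra.
Qed.
Lemma exp_neg_lt1 t : 0 < t -> exp (- t) < 1.
Proof. intros; rewrite <- exp_0; apply exp_increasing; lra. Qed.

Lemma lim_rp_0 (a : R) : 0 < a ->
  filterlim (fun t => Rpower t a * exp (- t)) (at_right 0) (locally 0).
Proof.
intros Ha P [eps HP].
set (d := Rpower eps (/ a)).
assert (Hd : 0 < d) by (unfold d, Rpower; apply exp_pos).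
exists (mkposreal d Hd). intros t Ht Ht0. apply HP.
change (Rabs (t - 0) < d) in Ht. apply Rabs_def2 in Ht.
change (Rabs (Rpower t a * exp (- t) - 0) < eps).
assert (H1 : Rpower t a < Rpower d a) by (apply Rlt_Rpower_l; lra).
assert (H2 : Rpower d a = eps).
{ unfold d. rewrite Rpower_mult. rewrite Rinv_l by lra. apply Rpower_1. apply cond_pos. }
assert (H3 : 0 < Rpower t a) by (unfold Rpower; apply exp_pos).
assert (H4 := exp_neg_lt1 t Ht0). assert (H5 := exp_pos (- t)).
rewrite Rminus_0_r, Rabs_pos_eq by nra. nra.
Qed.

Lemma lim_rp_inf (a : R) :
  filterlim (fun t => Rpower t a * exp (- t)) (Rbar_locally p_infty) (locally 0).
Proof.
intros P [eps HP].
assert (Hl := is_lim_div_ln_p).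
unfold is_lim in Hl. simpl in Hl.
destruct (Hl (fun z => Rabs z < / (2 * (Rabs a + 1)))) as [M HM].
{ assert (Hp : 0 < / (2 * (Rabs a + 1))).
  { apply Rinv_0_lt_compat. assert (0 <= Rabs a) by apply Rabs_pos. lra. }
  exists (mkposreal _ Hp). intros z Hz. change (Rabs (z - 0) < / (2 * (Rabs a + 1))) in Hz.
  now rewrite Rminus_0_r in Hz. }
exists (Rmax (Rmax M 1) (- 2 * ln eps)). intros t Ht.
assert (HtM : M < t) by (eapply Rle_lt_trans; [|apply Ht]; eapply Rle_trans; [apply Rmax_l|apply Rmax_l]).
assert (Ht1 : 1 < t) by (eapply Rle_lt_trans; [|apply Ht]; eapply Rle_trans; [apply Rmax_r|apply Rmax_l]).
assert (Hte : - 2 * ln eps < t) by (eapply Rle_lt_trans; [|apply Ht]; apply Rmax_r).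
specialize (HM t HtM).
apply HP. change (Rabs (Rpower t a * exp (- t) - 0) < eps).
rewrite Rminus_0_r.
unfold Rpower. rewrite <- exp_plus. rewrite Rabs_pos_eq by (left; apply exp_pos).
assert (Hln : 0 < ln t) by (rewrite <- ln_1; apply ln_increasing; lra).
assert (Hb : a * ln t <= t / 2).
{ assert (Hq : Rabs (ln t / t) = ln t / t).
  { apply Rabs_pos_eq. unfold Rdiv. apply Rmult_le_pos; [lra|]. left; apply Rinv_0_lt_compat; lra. }
  rewrite Hq in HM.
  assert (Ha1 : 0 < Rabs a + 1) by (assert (0 <= Rabs a) by apply Rabs_pos; lra).
  assert (ln t < t / (2 * (Rabs a + 1))).
  { apply (Rmult_lt_compat_r t) in HM; [|lra].
    unfold Rdiv in *. rewrite Rmult_assoc, Rinv_l in HM by lra.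
    rewrite Rmult_comm. lra. }
  assert (a * ln t <= Rabs a * ln t).
  { apply Rmult_le_compat_r; [lra|apply Rle_abs]. }
  assert (Rabs a * ln t <= (Rabs a + 1) * ln t) by nra.
  assert ((Rabs a + 1) * ln t <= t / 2).
  { assert ((Rabs a + 1) * ln t < (Rabs a + 1) * (t / (2 * (Rabs a + 1)))).
    { apply Rmult_lt_compat_l; lra. }
    replace ((Rabs a + 1) * (t / (2 * (Rabs a + 1)))) with (t/2) in H2 by (field; lra). lra. }
  lra. }
apply Rle_lt_trans with (exp (- (t/2))).
{ destruct (Req_dec (a * ln t + - t) (- (t/2))) as [E|E]; [rewrite E; lra|].
  left. apply exp_increasing. lra. }
assert (Ee : exp (ln eps) = eps) by (apply exp_ln; apply cond_pos).
rewrite <- Ee. apply exp_increasing. lra.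
Qed.
Definition gam (a t : R) := Rpower t (a - 1) * exp (- t).

Lemma gam_cont a t : 0 < t -> continuous (gam a) t.
Proof. intros Ht. apply (ex_derive_continuous (gam a)). unfold gam, Rpower. auto_derive. lra. Qed.

Lemma gam_pos a t : 0 < t -> 0 < gam a t.
Proof. intros. unfold gam, Rpower. apply Rmult_lt_0_compat; apply exp_pos. Qed.

Lemma gam_ex a u v : 0 < u <= v -> ex_RInt (gam a) u v.
Proof. intros H. apply (ex_RInt_continuous (V:=R_CompleteNormedModule)). intros z Hz. apply gam_cont.
rewrite Rmin_left in Hz by lra. lra. Qed.

Lemma exp_half_int (T b : R) : T <= b ->
  is_RInt (fun t => exp (- (t/2))) T b (-2 * exp (- (b/2)) - (-2 * exp (- (T/2)))).
Proof.
intros H.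
apply (is_RInt_derive (fun t => -2 * exp (- (t/2)))).
- intros x _. auto_derive; auto. change RinvImpl.Rinv with Rinv. unfold Rdiv. field.
- intros x _. apply (ex_derive_continuous (fun t => exp (- (t/2)))). auto_derive. auto.
Qed.

Ltac rfix := change RinvImpl.Rinv with Rinv in *.

Lemma U_ex (a y : R) : 0 < y ->
  exists l, is_RInt_gen (gam a) (at_point y) (Rbar_locally p_infty) l /\
            (forall b, y <= b -> RInt (gam a) y b <= l).
Proof.
intros Hy.
destruct (lim_rp_inf (a - 1) (fun z => Rabs z < 1)) as [M HM].
{ exists (mkposreal 1 Rlt_0_1). intros z Hz. change (Rabs (z - 0) < 1) in Hz. now rewrite Rminus_0_r in Hz. }
set (T0 := Rmax y (2 * Rabs M + 2)).
set (K := Rpower 2 (a - 1)).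
assert (HK : 0 < K) by (unfold K, Rpower; apply exp_pos).
assert (HT0y : y <= T0) by apply Rmax_l.
assert (HT0M : 2 * Rabs M + 2 <= T0) by apply Rmax_r.
assert (HMa : M <= Rabs M) by apply Rle_abs.
assert (HMb : 0 <= Rabs M) by apply Rabs_pos.
assert (Hbd : forall t, T0 <= t -> gam a t <= K * exp (- (t/2))).
{ intros t Ht.
  assert (Ht2 : M < t / 2) by lra.
  specialize (HM _ Ht2).
  assert (Hp : 0 < Rpower (t/2) (a-1) * exp (- (t/2))) by (unfold Rpower; apply Rmult_lt_0_compat; apply exp_pos).
  rewrite Rabs_pos_eq in HM by lra.
  unfold gam.
  replace (Rpower t (a - 1)) with (K * Rpower (t/2) (a-1)).
  2: { unfold K. rewrite Rpower_mult_distr by lra. f_equal. field. }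
  replace (exp (- t)) with (exp (- (t/2)) * exp (- (t/2))).
  2: { rewrite <- exp_plus. f_equal. field. }
  assert (0 < exp (- (t/2))) by apply exp_pos.
  set (E := exp (- (t/2))) in *. set (Rp := Rpower (t/2) (a-1)) in *.
  assert (K * (Rp * E) * E <= K * 1 * E).
  { apply Rmult_le_compat_r; [lra|]. apply Rmult_le_compat_l; lra. }
  replace (K * Rp * (E * E)) with (K * (Rp * E) * E) by ring. lra. }
apply (mono_inf (gam a) y (RInt (gam a) y T0 + 2 * K)).
- intros t Ht. left. apply gam_pos. lra.
- intros b Hb. apply gam_ex. lra.
- intros b Hb.
  assert (H0 : 0 <= 2 * K) by lra.
  destruct (Rle_lt_dec b T0) as [HbT|HbT].
  + assert (RInt (gam a) y b <= RInt (gam a) y T0).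
    { apply RInt_mono_b; auto. intros; left; apply gam_pos; lra. intros; apply gam_ex; lra. }
    lra.
  + rewrite <- (RInt_Chasles (gam a) y T0 b) by (apply gam_ex; lra).
    change (plus ?x ?y) with (x + y).
    assert (RInt (gam a) T0 b <= 2 * K).
    { apply Rle_trans with (K * (-2 * exp (- (b/2)) - (-2 * exp (- (T0/2))))).
      - apply (is_RInt_le (gam a) (fun t => K * exp (- (t/2))) T0 b); [lra| | |].
        + apply (RInt_correct (gam a)). apply gam_ex. lra.
        + apply (is_RInt_scal (fun t => exp (- (t/2))) T0 b K). apply exp_half_int. lra.
        + intros x Hx. apply Hbd. lra.
      - assert (0 < exp (- (b/2))) by apply exp_pos.
        assert (exp (- (T0/2)) < 1) by (apply exp_neg_lt1; lra).
        nra. }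
    lra.
Qed.

Lemma Rpower_m1 t c : 0 < t -> Rpower t (c - 1) = Rpower t c / t.
Proof.
intros Ht. unfold Rminus. rewrite Rpower_plus, Rpower_Ropp, Rpower_1 by lra. reflexivity.
Qed.

Lemma L0_ex (s : R) : 0 < s ->
  exists l, is_RInt_gen (gam s) (at_right 0) (at_point 1) l /\ 0 <= l.
Proof.
intros Hs.
destruct (mono_0 (gam s) 1 (/ s)) as [l [Hl Hle]].
- lra.
- intros t Ht. left. now apply gam_pos.
- intros e He. apply gam_ex. lra.
- intros e He.
  apply Rle_trans with ((Rpower 1 s / s) - (Rpower e s / s)).
  + apply (is_RInt_le (gam s) (fun t => Rpower t (s - 1)) e 1); [lra| | |].
    * apply (RInt_correct (gam s)). apply gam_ex. lra.
    * apply (is_RInt_derive (fun t => Rpower t s / s)).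
      -- intros x Hx. rewrite Rmin_left in Hx by lra.
         unfold Rpower. auto_derive; [lra|]. rfix. fold (Rpower x (s-1)) (Rpower x s).
         rewrite Rpower_m1 by lra. unfold Rpower. field. lra.
      -- intros x Hx. rewrite Rmin_left in Hx by lra.
         apply (ex_derive_continuous (fun t => Rpower t (s - 1))). unfold Rpower. auto_derive. lra.
    * intros x Hx. unfold gam.
      assert (0 < Rpower x (s - 1)) by (unfold Rpower; apply exp_pos).
      assert (exp (- x) < 1) by (apply exp_neg_lt1; lra). nra.
  + replace (Rpower 1 s) with 1 by (unfold Rpower; rewrite ln_1, Rmult_0_r, exp_0; reflexivity).
    assert (0 < Rpower e s) by (unfold Rpower; apply exp_pos).
    assert (0 < / s) by (apply Rinv_0_lt_compat; lra).
    assert (0 < Rpower e s * / s) by (apply Rmult_lt_0_compat; lra). unfold Rdiv. lra.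
- exists l. split; auto.
  apply Rle_trans with (RInt (gam s) 1 1); [|apply Hle; lra].
  rewrite RInt_point. apply Rle_refl.
Qed.

Lemma Gamma_is (s : R) : 0 < s ->
  is_RInt_gen (gam s) (at_right 0) (Rbar_locally p_infty) (Gamma s) /\ 0 < Gamma s.
Proof.
intros Hs.
destruct (L0_ex s Hs) as [l1 [H1 H1p]].
destruct (U_ex s 1 Rlt_0_1) as [l2 [H2 H2b]].
assert (H := is_RInt_gen_Chasles (gam s) 1 l1 l2 H1 H2).
assert (E : Gamma s = plus l1 l2).
{ unfold Gamma. fold (gam s). apply is_RInt_gen_unique. exact H. }
rewrite E. split; [exact H|].
change (plus l1 l2) with (l1 + l2).
assert (0 < RInt (gam s) 1 2).
{ apply RInt_gt_0; [lra| |].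
  - intros x Hx. apply gam_pos. lra.
  - intros x Hx. apply gam_cont. lra. }
assert (RInt (gam s) 1 2 <= l2) by (apply H2b; lra).
lra.
Qed.

Definition gF (a t : R) := Rpower t a * exp (- t).

Lemma gF_der a t : 0 < t -> is_derive (gF a) t (a * gam a t - gam (a + 1) t).
Proof.
intros Ht. unfold gF, gam, Rpower. auto_derive; [lra|]. rfix.
replace (a + 1 - 1) with a by ring.
fold (Rpower t a) (Rpower t (a-1)). rewrite Rpower_m1 by lra.
field. lra.
Qed.

Lemma pos_loc x : 0 < x -> locally x (fun t => 0 < t).
Proof.
intros Hx. exists (mkposreal x Hx). intros t Ht. change (Rabs (t - x) < x) in Ht.
apply Rabs_def2 in Ht. lra.
Qed.

Lemma gF_Derive a t : 0 < t -> Derive (gF a) t = a * gam a t - gam (a + 1) t.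
Proof. intros; apply is_derive_unique; now apply gF_der. Qed.

Lemma gF_Derive_cont a t : 0 < t -> continuous (Derive (gF a)) t.
Proof.
intros Ht.
apply (continuous_ext_loc _ (fun t => a * gam a t - gam (a + 1) t)).
- apply filter_imp with (2 := pos_loc t Ht). intros u Hu. now rewrite gF_Derive.
- apply (ex_derive_continuous (fun t0 => a * gam a t0 - gam (a + 1) t0)).
  unfold gam, Rpower. auto_derive. lra.
Qed.

Lemma prod_pos_cond (Fa : (R -> Prop) -> Prop) (P : R -> Prop) :
  Fa (fun u => 0 < u) ->
  (forall x, 0 < x -> P x) ->
  filter_prod Fa (Rbar_locally p_infty)
    (fun ab => forall x, Rmin (fst ab) (snd ab) <= x <= Rmax (fst ab) (snd ab) -> P x).
Proof.
intros HF HP. apply Filter_prod with (fun u => 0 < u) (fun v => 0 < v); auto.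
- exists 0. auto.
- intros u v Hu Hv x Hx. simpl in Hx. apply HP.
  assert (0 < Rmin u v) by (apply Rmin_glb_lt; auto). lra.
Qed.

Lemma prod_pos_cond' (Fa : (R -> Prop) -> Prop) (P : R -> Prop) :
  Fa (fun u => 0 < u) ->
  (forall x, 0 < x -> P x) ->
  filter_prod Fa (Rbar_locally p_infty)
    (fun ab => forall x, Rmin (fst ab) (snd ab) < x < Rmax (fst ab) (snd ab) -> P x).
Proof.
intros HF HP. apply Filter_prod with (fun u => 0 < u) (fun v => 0 < v); auto.
- exists 0. auto.
- intros u v Hu Hv x Hx. simpl in Hx. apply HP.
  assert (0 < Rmin u v) by (apply Rmin_glb_lt; auto). lra.
Qed.

Lemma Gamma_rec s : 0 < s -> Gamma (s + 1) = s * Gamma s.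
Proof.
intros Hs.
destruct (Gamma_is s Hs) as [HG _].
assert (HD : is_RInt_gen (Derive (gF s)) (at_right 0) (Rbar_locally p_infty) (0 - 0)).
{ apply is_RInt_gen_Derive.
  - apply prod_pos_cond. exists (mkposreal 1 Rlt_0_1). intros; auto.
    intros x Hx. exists (s * gam s x - gam (s + 1) x). now apply gF_der.
  - apply prod_pos_cond. exists (mkposreal 1 Rlt_0_1). intros; auto.
    intros x Hx. now apply gF_Derive_cont.
  - apply lim_rp_0. lra.
  - apply lim_rp_inf. }
assert (H2 := is_RInt_gen_minus _ _ _ _ (is_RInt_gen_scal _ s _ HG) HD).
unfold Gamma. fold (gam (s + 1)). apply is_RInt_gen_unique.
apply (is_RInt_gen_ext (fun y => minus (scal s (gam s y)) (Derive (gF s) y))).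
- apply prod_pos_cond'. exists (mkposreal 1 Rlt_0_1). intros; auto.
  intros x Hx. rewrite gF_Derive by lra. change (s * gam s x - (s * gam s x - gam (s + 1) x) = gam (s+1) x). ring.
- fold (Gamma s). replace (s * Gamma s) with (minus (scal s (Gamma s)) (0 - 0)); auto.
  change (s * Gamma s - (0 - 0) = s * Gamma s). ring.
Qed.

Lemma U_rec a y : 0 < y ->
  upper_gamma (a + 1) y = Rpower y a * exp (- y) + a * upper_gamma a y.
Proof.
intros Hy.
destruct (U_ex a y Hy) as [l [HU _]].
assert (El : upper_gamma a y = l).
{ unfold upper_gamma. fold (gam a). now apply is_RInt_gen_unique. }
assert (HD : is_RInt_gen (Derive (gF a)) (at_point y) (Rbar_locally p_infty) (0 - gF a y)).
{ apply is_RInt_gen_Derive.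
  - apply prod_pos_cond. exact Hy.
    intros x Hx. exists (a * gam a x - gam (a + 1) x). now apply gF_der.
  - apply prod_pos_cond. exact Hy.
    intros x Hx. now apply gF_Derive_cont.
  - intros P HP. exact (locally_singleton _ _ HP).
  - apply lim_rp_inf. }
assert (H2 := is_RInt_gen_minus _ _ _ _ (is_RInt_gen_scal _ a _ HU) HD).
rewrite El.
unfold upper_gamma. fold (gam (a + 1)). apply is_RInt_gen_unique.
apply (is_RInt_gen_ext (fun y => minus (scal a (gam a y)) (Derive (gF a) y))).
- apply prod_pos_cond'. exact Hy.
  intros x Hx. rewrite gF_Derive by lra. change (a * gam a x - (a * gam a x - gam (a + 1) x) = gam (a+1) x). ring.
- replace (Rpower y a * exp (- y) + a * l) with (minus (scal a l) (0 - gF a y)); auto.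
  change (a * l - (0 - gF a y) = Rpower y a * exp (- y) + a * l). unfold gF. ring.
Qed.

Lemma up_neg s : 0 < s -> Z.to_nat (up (- s)) = 0%nat.
Proof.
intros Hs. destruct (archimed (- s)) as [H1 H2].
assert (IZR (up (- s)) < 1) by lra.
assert (Hz : (up (- s) < 1)%Z) by (apply lt_IZR; exact H).
lia.
Qed.

Lemma rgamma_pos_eq s : 0 < s -> rgamma s = / Gamma s.
Proof.
intros Hs. unfold rgamma. cbv zeta. rewrite up_neg by exact Hs. simpl.
rewrite Rplus_0_r. unfold Rdiv. ring.
Qed.

Lemma rgamma_0 : rgamma 0 = 0.
Proof.
unfold rgamma. cbv zeta. rewrite Ropp_0.
destruct (archimed 0) as [H1 H2].
assert (Hz : up 0 = 1%Z).
{ apply Z.le_antisymm.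
  - apply le_IZR. lra.
  - apply lt_IZR in H1. lia. }
rewrite Hz. simpl. unfold Rdiv. ring.
Qed.

Lemma rgamma_pos s : 0 < s -> 0 < rgamma s.
Proof.
intros Hs. rewrite rgamma_pos_eq by exact Hs. apply Rinv_0_lt_compat. apply Gamma_is. exact Hs.
Qed.

Lemma rgamma_rec s : 0 <= s -> rgamma s = s * rgamma (s + 1).
Proof.
intros [Hs|Hs].
- rewrite !rgamma_pos_eq by lra. rewrite Gamma_rec by lra.
  assert (0 < Gamma s) by (apply Gamma_is; lra). field. lra.
- subst. rewrite rgamma_0. ring.
Qed.



Lemma sum_n_mono (c : nat -> R) n p : (forall k, 0 <= c k) -> sum_n c n <= sum_n c (n + p).
Proof.
intros Hc. induction p.
- rewrite Nat.add_0_r. lra.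
- rewrite Nat.add_succ_r, sum_Sn. change (plus ?x ?y) with (x + y). specialize (Hc (S (n + p))). lra.
Qed.

Lemma sum_le_Series (c : nat -> R) n : (forall k, 0 <= c k) -> ex_series c -> sum_n c n <= Series c.
Proof.
intros Hc Hex.
assert (H := Series_correct _ Hex).
assert (Hl : is_lim_seq (sum_n c) (Series c)) by exact H.
assert (Hl0 : is_lim_seq (fun _ : nat => sum_n c n) (sum_n c n)) by apply is_lim_seq_const.
change (Rbar_le (sum_n c n) (Series c)).
apply (is_lim_seq_le_loc (fun _ => sum_n c n) (sum_n c) _ _); auto.
exists n. intros m Hm. replace m with (n + (m - n))%nat by lia. now apply sum_n_mono.
Qed.

Lemma sum_n_minusR (u v : nat -> R) n : sum_n (fun k => u k - v k) n = sum_n u n - sum_n v n.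
Proof.
induction n.
- rewrite !sum_O. reflexivity.
- rewrite !sum_Sn, IHn. change (plus ?x ?y) with (x + y). match goal with |- ?a = ?b => change (@eq R a b) end. ring.
Qed.

Lemma sum_n_plusR (u v : nat -> R) n : sum_n (fun k => u k + v k) n = sum_n u n + sum_n v n.
Proof.
induction n.
- rewrite !sum_O. reflexivity.
- rewrite !sum_Sn, IHn. change (plus ?x ?y) with (x + y). match goal with |- ?a = ?b => change (@eq R a b) end. ring.
Qed.

Lemma tail_bound (a M : nat -> R) n :
  (forall k, Rabs (a k) <= M k) -> ex_series M ->
  Rabs (Series a - sum_n a n) <= Series M - sum_n M n.
Proof.
intros Ha HM.
assert (Hexa : ex_series a).
{ apply (ex_series_le a M); auto. }
assert (H1 : sum_n (fun k => M k - a k) n <= Series (fun k => M k - a k)).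
{ apply sum_le_Series. intros k. specialize (Ha k). pose proof (Rle_abs (a k)). pose proof (Rle_abs (- a k)). rewrite Rabs_Ropp in *. lra.
  exact (ex_series_minus M a HM Hexa). }
assert (H2 : sum_n (fun k => M k + a k) n <= Series (fun k => M k + a k)).
{ apply sum_le_Series. intros k. specialize (Ha k). pose proof (Rle_abs (a k)). pose proof (Rle_abs (- a k)). rewrite Rabs_Ropp in *. lra.
  exact (ex_series_plus M a HM Hexa). }
rewrite Series_minus in H1 by auto. rewrite Series_plus in H2 by auto.
rewrite sum_n_minusR in H1. rewrite sum_n_plusR in H2.
apply Rabs_le. lra.
Qed.

Definition clamp (y b t : R) := Rmax y (Rmin b t).

Lemma clamp_id y b t : y <= t <= b -> clamp y b t = t.
Proof. intros H. unfold clamp. rewrite Rmin_right by lra. rewrite Rmax_right; lra. Qed.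

Lemma clamp_in y b t : y <= b -> y <= clamp y b t <= b.
Proof.
intros H. unfold clamp. split; [apply Rmax_l|].
apply Rmax_lub; [lra|apply Rmin_l].
Qed.

Lemma fin_interchange (g : nat -> R -> R) (y b : R) (M : nat -> R) :
  y <= b ->
  (forall k, ex_RInt (g k) y b) ->
  ex_series M ->
  (forall k t, y <= t <= b -> Rabs (g k t) <= M k) ->
  ex_series (fun k => RInt (g k) y b) /\
  is_RInt (fun t => Series (fun k => g k t)) y b (Series (fun k => RInt (g k) y b)).
Proof.
intros Hyb Hex HM Hb.
assert (HexS : ex_series (fun k => RInt (g k) y b)).
{ apply (ex_series_le _ (fun k => (b - y) * M k)).
  - intros k. change (Rabs (RInt (g k) y b) <= (b - y) * M k).
    apply abs_RInt_le_const; auto.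
  - apply (ex_series_scal_l (b - y) M HM). }
split; [exact HexS|].
set (f := fun n t => sum_n (fun k => g k (clamp y b t)) n).
set (G := fun t => Series (fun k => g k (clamp y b t))).
set (h := fun n => sum_n (fun k => RInt (g k) y b) n).
assert (Hint : forall n, is_RInt (f n) y b (h n)).
{ assert (Hk : forall k, is_RInt (fun t => g k (clamp y b t)) y b (RInt (g k) y b)).
  { intros k. apply (is_RInt_ext (g k)).
    - intros x Hx. rewrite Rmin_left, Rmax_right in Hx by lra. rewrite clamp_id; lra.
    - apply (RInt_correct (g k)). apply Hex. }
  induction n.
  - unfold f, h. apply (is_RInt_ext (fun t => g 0%nat (clamp y b t))).
    + intros x _. rewrite sum_O. reflexivity.
    + rewrite sum_O. apply Hk.
  - replace (h (S n)) with (h n + RInt (g (S n)) y b) by (unfold h; rewrite sum_Sn; reflexivity).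
    apply (is_RInt_ext (fun t => f n t + g (S n) (clamp y b t))).
    + intros x _. unfold f. rewrite sum_Sn. reflexivity.
    + apply (is_RInt_plus (V := R_NormedModule) (f n) (fun t => g (S n) (clamp y b t)) y b). apply IHn. apply Hk. }
assert (Hunif : filterlim f eventually (locally (G : fct_UniformSpace R R_CompleteNormedModule))).
{ intros P [eps HP].
  assert (HS := Series_correct _ HM).
  destruct (HS (fun z => Rabs (z - Series M) < eps)) as [N HN].
  { exists eps. intros z Hz. exact Hz. }
  exists N. intros n Hn. apply HP. intros t.
  change (Rabs (f n t - G t) < eps).
  specialize (HN n Hn). simpl in HN.
  assert (Htb := tail_bound (fun k => g k (clamp y b t)) M n).
  rewrite Rabs_minus_sym.
  eapply Rle_lt_trans. apply Htb; auto.
  intros k. apply Hb. apply clamp_in. lra.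
  eapply Rle_lt_trans; [apply Rle_abs|]. rewrite Rabs_minus_sym. exact HN. }
destruct (filterlim_RInt f y b eventually _ G h Hint Hunif) as [If [HIf HGI]].
assert (HS := Series_correct _ HexS).
assert (E : If = Series (fun k => RInt (g k) y b)).
{ assert (E1 := is_lim_seq_unique h If HIf).
  assert (HS' : is_lim_seq h (Series (fun k => RInt (g k) y b))) by exact HS.
  assert (E2 := is_lim_seq_unique h _ HS').
  rewrite E1 in E2. injection E2. auto. }
rewrite <- E.
apply (is_RInt_ext G); auto.
intros x Hx. rewrite Rmin_left, Rmax_right in Hx by lra. unfold G.
apply Series_ext. intros k. rewrite clamp_id; lra.
Qed.

Lemma lim_RInt_gen (g : R -> R) (y I : R) :
  is_RInt_gen g (at_point y) (Rbar_locally p_infty) I ->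
  filterlim (fun b => RInt g y b) (Rbar_locally p_infty) (locally I).
Proof.
intros H P HP. specialize (H P HP). destruct H as [Q R' HQ HR Hqr].
change (Rbar_locally p_infty (fun b => P (RInt g y b))). apply filter_imp with R'; auto. intros v Hv.
destruct (Hqr y v HQ Hv) as [z [Hz Pz]]. simpl in Hz.
rewrite (is_RInt_unique _ _ _ _ Hz). exact Pz.
Qed.

Lemma RInt_le_lim (g : R -> R) (y I : R) :
  (forall t, y <= t -> 0 <= g t) -> (forall b, y <= b -> ex_RInt g y b) ->
  is_RInt_gen g (at_point y) (Rbar_locally p_infty) I ->
  forall b, y <= b -> RInt g y b <= I.
Proof.
intros Hp Hex HI b Hb.
apply Rnot_lt_le. intros Hlt.
assert (Hl := lim_RInt_gen g y I HI).
assert (He : 0 < RInt g y b - I) by lra.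
destruct (Hl (fun z => Rabs (z - I) < RInt g y b - I)) as [M0 HM0].
{ exists (mkposreal _ He). intros z Hz. exact Hz. }
set (v := Rmax b M0 + 1).
assert (Hv : M0 < v) by (unfold v; generalize (Rmax_r b M0); lra).
specialize (HM0 v Hv).
assert (RInt g y b <= RInt g y v) by (apply RInt_mono_b; auto; unfold v; generalize (Rmax_l b M0); lra).
apply Rabs_def2 in HM0. lra.
Qed.

Lemma eventually_fin (Pk : nat -> R -> Prop) :
  (forall k, Rbar_locally p_infty (Pk k)) ->
  forall N, Rbar_locally p_infty (fun b => forall k, (k <= N)%nat -> Pk k b).
Proof.
intros H N. induction N.
- apply filter_imp with (Pk 0%nat); auto. intros b Hb k Hk. inversion Hk. subst. exact Hb.
- apply filter_imp with (fun b => (forall k, (k <= N)%nat -> Pk k b) /\ Pk (S N) b).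
  + intros b [H1 H2] k Hk. destruct (Nat.eq_dec k (S N)) as [->|Hne]; auto. apply H1. lia.
  + apply filter_and; auto.
Qed.

Lemma sum_n_le_const (d : nat -> R) (c : R) N :
  (forall k, (k <= N)%nat -> d k <= c) -> sum_n d N <= INR (S N) * c.
Proof.
intros H. induction N.
- rewrite sum_O. simpl. specialize (H 0%nat (le_n _)). lra.
- rewrite sum_Sn. change (plus ?x ?y) with (x + y).
  assert (sum_n d N <= INR (S N) * c) by (apply IHN; intros; apply H; lia).
  assert (d (S N) <= c) by (apply H; lia).
  rewrite S_INR. lra.
Qed.

Lemma loc_ball (x e : R) : 0 < e -> locally x (fun z => Rabs (z - x) < e).
Proof. intros H. exists (mkposreal e H). intros z Hz. exact Hz. Qed.

Lemma tannery (F : nat -> R -> R) (I : nat -> R) (y : R) :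
  (forall k b, y <= b -> 0 <= F k b <= I k) -> ex_series I ->
  (forall k, filterlim (F k) (Rbar_locally p_infty) (locally (I k))) ->
  filterlim (fun b => Series (fun k => F k b)) (Rbar_locally p_infty) (locally (Series I)).
Proof.
intros HF HI Hlim P [eps HP].
assert (He2 : 0 < eps / 2) by (destruct eps; simpl; lra).
destruct (Series_correct _ HI (fun z => Rabs (z - Series I) < eps / 2)) as [N HN].
{ exists (mkposreal _ He2). intros z Hz. exact Hz. }
specialize (HN N (le_n _)). simpl in HN.
set (c := eps / 2 / INR (S N)).
assert (Hc : 0 < c) by (unfold c; apply Rdiv_lt_0_compat; auto; apply lt_0_INR; lia).
assert (Hev := eventually_fin (fun k b => Rabs (F k b - I k) < c) (fun k => Hlim k (fun z => Rabs (z - I k) < c) (loc_ball (I k) c Hc)) N).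
apply filter_imp with (2 := filter_and _ _ Hev (ex_intro _ y (fun b Hb => Rlt_le _ _ Hb) : Rbar_locally p_infty (fun b => y <= b))).
intros b [Hb Hyb]. apply HP. change (Rabs (Series (fun k => F k b) - Series I) < eps).
assert (HexF : ex_series (fun k => F k b)).
{ apply (ex_series_le (K:=R_AbsRing) (V:=R_CompleteNormedModule) (fun k => F k b) I); auto. intros k. change (Rabs (F k b) <= I k).
  destruct (HF k b Hyb). rewrite Rabs_pos_eq; lra. }
assert (H1 := sum_le_Series (fun k => F k b) N (fun k => proj1 (HF k b Hyb)) HexF).
assert (H2 : Series (fun k => F k b) <= Series I).
{ apply Series_le; auto. }
assert (H3 : sum_n (fun k => I k - F k b) N <= INR (S N) * c).
{ apply sum_n_le_const. intros k Hk. specialize (Hb k Hk). apply Rabs_def2 in Hb. lra. }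
rewrite sum_n_minusR in H3.
assert (H4 : INR (S N) * c = eps / 2) by (unfold c; field; apply not_0_INR; lia).
rewrite Rabs_minus_sym, Rabs_pos_eq by lra.
apply Rabs_def2 in HN. change (@sum_n (NormedModule.AbelianMonoid R_AbsRing R_NormedModule)) with (@sum_n R_AbelianMonoid) in HN. set (sI := sum_n I N) in *. set (sF := sum_n (fun k => F k b) N) in *. lra.
Qed.

Lemma interchange (g : nat -> R -> R) (y : R) (I : nat -> R) :
  (forall k t, y <= t -> 0 <= g k t) ->
  (forall k b, y <= b -> ex_RInt (g k) y b) ->
  (forall k, is_RInt_gen (g k) (at_point y) (Rbar_locally p_infty) (I k)) ->
  ex_series I ->
  (forall b, y <= b -> exists M, ex_series M /\ forall k t, y <= t <= b -> Rabs (g k t) <= M k) ->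
  is_RInt_gen (fun t => Series (fun k => g k t)) (at_point y) (Rbar_locally p_infty) (Series I).
Proof.
intros Hp Hex HI HIs HM P HP.
assert (T := tannery (fun k b => RInt (g k) y b) I y).
destruct (T (fun k b Hb => conj (RInt_ge_0 (g k) y b Hb (Hex k b Hb) (fun x Hx => Hp k x ltac:(lra)))
                         (RInt_le_lim (g k) y (I k) (Hp k) (Hex k) (HI k) b Hb))
           HIs (fun k => lim_RInt_gen (g k) y (I k) (HI k)) P HP) as [M0 HM0].
apply Filter_prod with (fun u => u = y) (fun v => Rmax y M0 < v).
- reflexivity.
- exists (Rmax y M0). auto.
- intros u v -> Hv. simpl.
  assert (Hyv : y <= v) by (generalize (Rmax_l y M0); lra).
  assert (HM0v : M0 < v) by (generalize (Rmax_r y M0); lra).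
  destruct (HM v Hyv) as [M [HMs HMb]].
  destruct (fin_interchange g y v M Hyv (fun k => Hex k v Hyv) HMs HMb) as [_ Hi].
  exists (Series (fun k => RInt (g k) y v)). split; [exact Hi|]. apply HM0. exact HM0v.
Qed.

Lemma rgamma_nonneg s : 0 <= s -> 0 <= rgamma s.
Proof. intros [H|H]. left; now apply rgamma_pos. subst; rewrite rgamma_0; lra. Qed.

Lemma INR_fact_pos n : 0 < INR (fact n).
Proof. apply lt_0_INR. apply lt_O_fact. Qed.

Lemma rgamma_fact s j : 0 <= s -> rgamma (s + 1 + INR j) * INR (fact j) <= rgamma (s + 1).
Proof.
intros Hs. induction j.
- simpl. rewrite Rplus_0_r, Rmult_1_r. lra.
- set (a := s + 1 + INR j).
  assert (Ha : INR j + 1 <= a) by (unfold a; lra).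
  assert (Hj : 0 <= INR j) by apply pos_INR.
  replace (s + 1 + INR (S j)) with (a + 1) by (unfold a; rewrite S_INR; ring).
  assert (Hr : rgamma a = a * rgamma (a + 1)) by (apply rgamma_rec; lra).
  assert (Hr1 : rgamma (a + 1) = rgamma a / a) by (rewrite Hr; field; lra).
  rewrite Hr1. rewrite fact_simpl, mult_INR, S_INR.
  assert (0 <= rgamma a) by (apply rgamma_nonneg; lra).
  assert (0 < INR (fact j)) by apply INR_fact_pos.
  apply Rle_trans with (rgamma a * INR (fact j)); [|exact IHj].
  replace (rgamma a / a * ((INR j + 1) * INR (fact j))) with ((rgamma a * INR (fact j)) * ((INR j + 1) / a)) by (field; lra).
  rewrite <- (Rmult_1_r (rgamma a * INR (fact j))) at 2.
  apply Rmult_le_compat_l; [apply Rmult_le_pos; lra|].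
  assert (0 < a) by lra.
  apply (Rmult_le_reg_r a); auto. unfold Rdiv. rewrite Rmult_assoc, Rinv_l by lra. lra.
Qed.

Lemma rgamma_le s k : 0 <= s -> rgamma (s + INR k) <= rgamma s + rgamma (s + 1).
Proof.
intros Hs. destruct k.
- simpl. rewrite Rplus_0_r. assert (0 <= rgamma (s+1)) by (apply rgamma_nonneg; lra). lra.
- replace (s + INR (S k)) with (s + 1 + INR k) by (rewrite S_INR; ring).
  assert (H := rgamma_fact s k Hs).
  assert (H1 : 1 <= INR (fact k)) by (apply (le_INR 1); apply lt_O_fact).
  assert (0 <= rgamma (s + 1 + INR k)) by (apply rgamma_nonneg; assert (0 <= INR k) by apply pos_INR; lra).
  assert (0 <= rgamma s) by (apply rgamma_nonneg; lra).
  nra.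
Qed.

Lemma exp_series r : is_series (fun k => r ^ k / INR (fact k)) (exp r).
Proof.
assert (H := is_exp_Reals r). unfold is_pseries in H.
eapply is_series_ext; [|exact H]. intros n. simpl. rewrite pow_n_pow. change (scal ?a ?b) with (a * b). unfold Rdiv. ring.
Qed.

Lemma term_le_exp r n : 0 <= r -> r ^ n / INR (fact n) <= exp r.
Proof.
intros Hr.
assert (Hnn : forall k, 0 <= r ^ k / INR (fact k)).
{ intros k. apply Rdiv_le_0_compat. now apply pow_le. apply INR_fact_pos. }
apply Rle_trans with (sum_n (fun k => r ^ k / INR (fact k)) n).
- destruct n.
  + rewrite sum_O. lra.
  + rewrite sum_Sn. change (plus ?x ?y) with (x + y).
    assert (0 <= sum_n (fun k => r ^ k / INR (fact k)) n).
    { apply Rle_trans with (sum_n (fun _ => 0) n).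
      - rewrite sum_n_const. lra.
      - apply sum_n_m_le. auto. }
    lra.
- rewrite <- (is_series_unique _ _ (exp_series r)).
  apply sum_le_Series; auto. exists (exp r). apply exp_series.
Qed.

Lemma radius_fact (a : nat -> R) (C : R) :
  (forall k, Rabs (a k) <= C / INR (fact k)) -> CV_radius a = p_infty.
Proof.
intros Ha.
destruct (CV_radius_bounded a) as [Hub Hlub].
assert (Hall : forall r : R, Rbar_le r (CV_radius a)).
{ intros r. apply Hub. exists (C * exp (Rabs r)). intros n.
  rewrite Rabs_mult, <- RPow_abs.
  assert (0 <= Rabs r ^ n) by (apply pow_le; apply Rabs_pos).
  apply Rle_trans with (C / INR (fact n) * Rabs r ^ n).
  - apply Rmult_le_compat_r; auto.
  - assert (H1 := term_le_exp (Rabs r) n (Rabs_pos r)).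
    assert (HC : 0 <= C).
    { apply Rle_trans with (Rabs (a 0%nat)); [apply Rabs_pos|]. specialize (Ha 0%nat). simpl in Ha. lra. }
    replace (C / INR (fact n) * Rabs r ^ n) with (C * (Rabs r ^ n / INR (fact n))) by (field; apply not_0_INR; apply fact_neq_0).
    apply Rmult_le_compat_l; auto. }
destruct (CV_radius a) as [v| |] eqn:E; auto.
- specialize (Hall (v + 1)). simpl in Hall. lra.
- specialize (Hall 0). simpl in Hall. contradiction.
Qed.

Definition Pk (mu y : R) (k : nat) := rgamma (mu + INR k) * upper_gamma (mu + INR k) y.

Lemma U_is a y : 0 < y -> is_RInt_gen (gam a) (at_point y) (Rbar_locally p_infty) (upper_gamma a y)
                        /\ 0 <= upper_gamma a y.
Proof.
intros Hy. destruct (U_ex a y Hy) as [l [Hl Hb]].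
assert (E : upper_gamma a y = l) by (unfold upper_gamma; fold (gam a); now apply is_RInt_gen_unique).
rewrite E. split; auto.
apply Rle_trans with (RInt (gam a) y y); [|apply Hb; lra]. rewrite RInt_point. apply Rle_refl.
Qed.

Lemma Pk_nonneg mu y k : 0 <= mu -> 0 < y -> 0 <= Pk mu y k.
Proof.
intros Hmu Hy. unfold Pk. apply Rmult_le_pos.
- apply rgamma_nonneg. assert (0 <= INR k) by apply pos_INR. lra.
- apply U_is; auto.
Qed.

Lemma Pk_rec mu y k : 0 <= mu -> 0 < y ->
  Pk mu y (S k) = Pk mu y k + exp (- y) * Rpower y (mu + INR k) * rgamma (mu + INR k + 1).
Proof.
intros Hmu Hy. unfold Pk.
set (a := mu + INR k).
assert (Ha : 0 <= a) by (unfold a; assert (0 <= INR k) by apply pos_INR; lra).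
replace (mu + INR (S k)) with (a + 1) by (unfold a; rewrite S_INR; ring).
rewrite U_rec by exact Hy. rewrite (rgamma_rec a Ha). ring.
Qed.

Fixpoint psum (y : R) (k : nat) : R :=
  match k with O => 0 | S k => psum y k + y ^ k / INR (fact k) end.

Lemma psum_le_exp y k : 0 <= y -> psum y k <= exp y.
Proof.
intros Hy.
assert (Hnn : forall k, 0 <= y ^ k / INR (fact k)).
{ intros j. apply Rdiv_le_0_compat. now apply pow_le. apply INR_fact_pos. }
destruct k.
- simpl. left; apply exp_pos.
- assert (E : psum y (S k) = sum_n (fun j => y ^ j / INR (fact j)) k).
  { induction k.
    - simpl. rewrite sum_O. match goal with |- ?a = ?b => change (@eq R a b) end. simpl. ring.
    - change (psum y (S (S k))) with (psum y (S k) + y ^ (S k) / INR (fact (S k))).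
      rewrite IHk, sum_Sn. reflexivity. }
  rewrite E, <- (is_series_unique _ _ (exp_series y)).
  apply sum_le_Series; auto. exists (exp y). apply exp_series.
Qed.

Lemma Pk_bound mu y k : 0 <= mu -> 0 < y ->
  Pk mu y k <= Pk mu y 0 + exp (- y) * Rpower y mu * rgamma (mu + 1) * exp y.
Proof.
intros Hmu Hy.
set (C := exp (- y) * Rpower y mu * rgamma (mu + 1)).
assert (HC : 0 <= C).
{ unfold C. apply Rmult_le_pos; [apply Rmult_le_pos; left; [apply exp_pos|unfold Rpower; apply exp_pos]|].
  apply rgamma_nonneg; lra. }
assert (H : Pk mu y k <= Pk mu y 0 + C * psum y k).
{ induction k.
  - simpl. lra.
  - rewrite Pk_rec by auto. simpl psum.
    assert (Hinc : exp (- y) * Rpower y (mu + INR k) * rgamma (mu + INR k + 1) <= C * (y ^ k / INR (fact k))).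
    { unfold C. rewrite Rpower_plus, Rpower_pow by lra.
      assert (Hf := rgamma_fact mu k Hmu).
      replace (mu + INR k + 1) with (mu + 1 + INR k) by ring.
      assert (0 < INR (fact k)) by apply INR_fact_pos.
      assert (Hr : rgamma (mu + 1 + INR k) <= rgamma (mu + 1) / INR (fact k)).
      { apply (Rmult_le_reg_r (INR (fact k))); auto. unfold Rdiv. rewrite Rmult_assoc, Rinv_l by lra. lra. }
      assert (0 <= exp (- y) * Rpower y mu * y ^ k).
      { apply Rmult_le_pos; [apply Rmult_le_pos; left; [apply exp_pos|unfold Rpower; apply exp_pos]|]. apply pow_le; lra. }
      replace (exp (- y) * Rpower y mu * rgamma (mu + 1) * (y ^ k / INR (fact k)))
        with (exp (- y) * Rpower y mu * y ^ k * (rgamma (mu + 1) / INR (fact k))) by (field; lra).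
      replace (exp (- y) * (Rpower y mu * y ^ k) * rgamma (mu + 1 + INR k))
        with (exp (- y) * Rpower y mu * y ^ k * rgamma (mu + 1 + INR k)) by ring.
      apply Rmult_le_compat_l; auto. }
    lra. }
assert (psum y k <= exp y) by (apply psum_le_exp; lra).
assert (C * psum y k <= C * exp y) by (apply Rmult_le_compat_l; auto).
unfold C in *. lra.
Qed.

Lemma exp_le' a b : a <= b -> exp a <= exp b.
Proof. intros [H|H]. left; now apply exp_increasing. subst; lra. Qed.

Lemma ln_le' a b : 0 < a -> a <= b -> ln a <= ln b.
Proof. intros Ha [H|H]. left; now apply ln_increasing. subst; lra. Qed.

Lemma ln_sqrt' z : 0 < z -> ln (sqrt z) = ln z / 2.
Proof. intros Hz. rewrite <- Rpower_sqrt by exact Hz. rewrite ln_Rpower. field. Qed.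

Lemma rp_between c y b t : 0 < y <= t -> t <= b -> Rpower t c <= Rpower y c + Rpower b c.
Proof.
intros Hyt Htb. unfold Rpower.
assert (H1 := exp_pos (c * ln y)). assert (H2 := exp_pos (c * ln b)).
assert (ln y <= ln t) by (apply ln_le'; lra).
assert (ln t <= ln b) by (apply ln_le'; lra).
destruct (Rle_dec 0 c).
- assert (exp (c * ln t) <= exp (c * ln b)) by (apply exp_le'; nra). lra.
- assert (exp (c * ln t) <= exp (c * ln y)) by (apply exp_le'; nra). lra.
Qed.

Lemma bessel_term mu x t k : 0 < x -> 0 < t ->
  Rpower t ((mu - 1) / 2) * exp (- t - x) *
    (Rpower (2 * sqrt (x * t) / 2) (2 * INR k + (mu - 1)) / INR (fact k) * rgamma (INR k + (mu - 1) + 1))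
  = exp (- x) * Rpower x ((mu - 1) / 2) *
    (x ^ k / INR (fact k) * rgamma (mu + INR k) * gam (mu + INR k) t).
Proof.
intros Hx Ht.
replace (2 * sqrt (x * t) / 2) with (sqrt (x * t)) by field.
replace (INR k + (mu - 1) + 1) with (mu + INR k) by ring.
unfold gam. rewrite <- (Rpower_pow k x) by lra.
unfold Rpower. rewrite ln_sqrt' by nra. rewrite ln_mult by lra.
set (F := INR (fact k)). set (G := rgamma (mu + INR k)).
assert (HF : F <> 0) by (unfold F; apply not_0_INR; apply fact_neq_0).
assert (HE : exp ((mu - 1) / 2 * ln t) * exp (- t - x) * exp ((2 * INR k + (mu - 1)) * ((ln x + ln t) / 2))
  = exp (- x) * exp ((mu - 1) / 2 * ln x) * exp (INR k * ln x) * exp ((mu + INR k - 1) * ln t) * exp (- t)).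
{ rewrite <- !exp_plus. f_equal. field. }
transitivity ((exp ((mu - 1) / 2 * ln t) * exp (- t - x) * exp ((2 * INR k + (mu - 1)) * ((ln x + ln t) / 2))) * G / F).
{ field. exact HF. }
rewrite HE. field. exact HF.
Qed.

Definition integrand (mu x : R) (t : R) :=
  Rpower t ((mu - 1) / 2) * exp (- t - x) * besselI (mu - 1) (2 * sqrt (x * t)).

Definition gk (mu x : R) (k : nat) (t : R) :=
  (x ^ k / INR (fact k) * rgamma (mu + INR k)) * gam (mu + INR k) t.

Lemma integrand_series mu x t : 0 < x -> 0 < t ->
  integrand mu x t = exp (- x) * Rpower x ((mu - 1) / 2) * Series (fun k => gk mu x k t).
Proof.
intros Hx Ht. unfold integrand, besselI.
rewrite <- !Series_scal_l. apply Series_ext. intros k.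
rewrite bessel_term by auto. unfold gk. ring.
Qed.

Lemma gk_nonneg mu x k t : 0 <= mu -> 0 < x -> 0 < t -> 0 <= gk mu x k t.
Proof.
intros Hmu Hx Ht. unfold gk.
assert (0 <= INR k) by apply pos_INR.
apply Rmult_le_pos; [apply Rmult_le_pos|left; now apply gam_pos].
- apply Rdiv_le_0_compat; [apply pow_le; lra|apply INR_fact_pos].
- apply rgamma_nonneg. lra.
Qed.

Lemma Marcum_series mu x y : 0 <= mu -> 0 < x -> 0 < y ->
  MarcumQ mu x y = exp (- x) * Series (fun k => x ^ k / INR (fact k) * Pk mu y k).
Proof.
intros Hmu Hx Hy.
set (I := fun k => (x ^ k / INR (fact k) * rgamma (mu + INR k)) * upper_gamma (mu + INR k) y).
set (Pb := Pk mu y 0 + exp (- y) * Rpower y mu * rgamma (mu + 1) * exp y).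
assert (HIs : ex_series I).
{ apply (ex_series_le (K:=R_AbsRing) (V:=R_CompleteNormedModule) I (fun k => Pb * (x ^ k / INR (fact k)))).
  - intros k. change (Rabs (I k) <= Pb * (x ^ k / INR (fact k))).
    unfold I. replace (x ^ k / INR (fact k) * rgamma (mu + INR k) * upper_gamma (mu + INR k) y)
      with ((x ^ k / INR (fact k)) * Pk mu y k) by (unfold Pk; ring).
    assert (0 <= x ^ k / INR (fact k)) by (apply Rdiv_le_0_compat; [apply pow_le; lra|apply INR_fact_pos]).
    assert (H0 := Pk_nonneg mu y k Hmu Hy). assert (H1 := Pk_bound mu y k Hmu Hy).
    rewrite Rabs_pos_eq by (apply Rmult_le_pos; auto). rewrite Rmult_comm. apply Rmult_le_compat_r; auto.
  - apply (ex_series_scal_l (K:=R_AbsRing) (V:=R_NormedModule) Pb). exists (exp x). apply exp_series. }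
assert (Hint : is_RInt_gen (fun t => Series (fun k => gk mu x k t)) (at_point y) (Rbar_locally p_infty) (Series I)).
{ apply interchange.
  - intros k t Ht. apply gk_nonneg; auto; lra.
  - intros k b Hb. unfold gk. apply (ex_RInt_scal (V:=R_NormedModule) (gam (mu + INR k))). apply gam_ex. lra.
  - intros k. unfold gk, I. apply (is_RInt_gen_scal (gam (mu + INR k))). apply U_is. exact Hy.
  - exact HIs.
  - intros b Hb.
    set (R0 := rgamma mu + rgamma (mu + 1)).
    set (D := Rpower y (mu - 1) + Rpower b (mu - 1)).
    exists (fun k => (R0 * D) * ((x * b) ^ k / INR (fact k))). split.
    + apply (ex_series_scal_l (K:=R_AbsRing) (V:=R_NormedModule) (R0 * D)). exists (exp (x * b)). apply exp_series.
    + intros k t Ht.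
      rewrite Rabs_pos_eq by (apply gk_nonneg; auto; lra).
      unfold gk, gam.
      assert (Hk : 0 <= INR k) by apply pos_INR.
      assert (Hr := rgamma_le mu k Hmu).
      assert (Hr0 : 0 <= rgamma (mu + INR k)) by (apply rgamma_nonneg; lra).
      assert (Hxk : 0 <= x ^ k / INR (fact k)) by (apply Rdiv_le_0_compat; [apply pow_le; lra|apply INR_fact_pos]).
      replace (Rpower t (mu + INR k - 1)) with (Rpower t (mu - 1) * t ^ k).
      2: { rewrite <- (Rpower_pow k t) by lra. rewrite <- Rpower_plus. f_equal. ring. }
      assert (Hpt : 0 < Rpower t (mu - 1)) by (unfold Rpower; apply exp_pos).
      assert (Hb1 : Rpower t (mu - 1) <= D) by (apply rp_between; lra).
      assert (Htk : t ^ k <= b ^ k) by (apply pow_incr; lra).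
      assert (Htk0 : 0 <= t ^ k) by (apply pow_le; lra).
      assert (He : exp (- t) <= 1) by (left; apply exp_neg_lt1; lra).
      assert (He0 : 0 < exp (- t)) by apply exp_pos.
      replace ((R0 * D) * ((x * b) ^ k / INR (fact k))) with ((x ^ k / INR (fact k) * R0) * (D * b ^ k * 1))
        by (rewrite Rpow_mult_distr; field; apply not_0_INR; apply fact_neq_0).
      apply Rmult_le_compat; [apply Rmult_le_pos; auto|apply Rmult_le_pos; [apply Rmult_le_pos; lra|lra]| |].
      * apply Rmult_le_compat_l; auto.
      * apply Rmult_le_compat; [apply Rmult_le_pos; lra|lra| |lra].
        apply Rmult_le_compat; lra. }
assert (Hint2 := is_RInt_gen_scal _ (exp (- x) * Rpower x ((mu - 1) / 2)) _ Hint).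
assert (Hint3 : is_RInt_gen (integrand mu x) (at_point y) (Rbar_locally p_infty)
                  (exp (- x) * Rpower x ((mu - 1) / 2) * Series I)).
{ apply (is_RInt_gen_ext (fun t => scal (exp (- x) * Rpower x ((mu - 1) / 2)) (Series (fun k => gk mu x k t)))); [|exact Hint2].
  apply prod_pos_cond'. exact Hy. intros t Ht. rewrite integrand_series by auto. reflexivity. }
unfold MarcumQ. destruct (Rlt_dec 0 x) as [_|Hn]; [|lra].
fold (integrand mu x).
rewrite (is_RInt_gen_unique _ _ Hint3).
assert (ES : Series I = Series (fun k => x ^ k / INR (fact k) * Pk mu y k)).
{ apply Series_ext. intros k. unfold I, Pk. ring. }
rewrite ES.
assert (Ep : Rpower x ((1 - mu) / 2) * Rpower x ((mu - 1) / 2) = 1).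
{ rewrite <- Rpower_plus. replace ((1 - mu) / 2 + (mu - 1) / 2) with 0 by field. apply Rpower_O. exact Hx. }
transitivity ((Rpower x ((1 - mu) / 2) * Rpower x ((mu - 1) / 2)) * (exp (- x) * Series (fun k => x ^ k / INR (fact k) * Pk mu y k))).
{ ring. }
rewrite Ep. ring.
Qed.

Definition cS (s : R) (n : nat) := rgamma (s + INR n + 1) / INR (fact n).
Definition fS (s u : R) := PSeries (cS s) u.

Lemma cS_nonneg s n : 0 <= s -> 0 <= cS s n.
Proof.
intros Hs. unfold cS. apply Rdiv_le_0_compat; [|apply INR_fact_pos].
apply rgamma_nonneg. assert (0 <= INR n) by apply pos_INR. lra.
Qed.

Lemma cS_radius s : 0 <= s -> CV_radius (cS s) = p_infty.
Proof.
intros Hs. apply (radius_fact _ (rgamma (s + 1) + rgamma (s + 1 + 1))).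
intros k. rewrite Rabs_pos_eq by (apply cS_nonneg; auto). unfold cS.
apply Rmult_le_compat_r; [left; apply Rinv_0_lt_compat; apply INR_fact_pos|].
replace (s + INR k + 1) with (s + 1 + INR k) by ring. apply rgamma_le. lra.
Qed.

Lemma cS_in s u : 0 <= s -> Rbar_lt (Rabs u) (CV_radius (cS s)).
Proof. intros Hs. rewrite cS_radius by auto. simpl. auto. Qed.

Lemma cS_deriv s n : PS_derive (cS s) n = cS (s + 1) n.
Proof.
unfold PS_derive, cS. rewrite fact_simpl, mult_INR.
replace (s + INR (S n) + 1) with (s + 1 + INR n + 1) by (rewrite S_INR; ring).
assert (0 < INR (fact n)) by apply INR_fact_pos.
assert (0 < INR (S n)) by (apply lt_0_INR; lia).
field. lra.
Qed.

Lemma fS_der s u : 0 <= s -> is_derive (fS s) u (fS (s + 1) u).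
Proof.
intros Hs. unfold fS.
replace (PSeries (cS (s + 1)) u) with (PSeries (PS_derive (cS s)) u).
- apply is_derive_PSeries. apply cS_in; auto.
- apply PSeries_ext. intros n. apply cS_deriv.
Qed.

Lemma fS_Derive s u : 0 <= s -> Derive (fS s) u = fS (s + 1) u.
Proof. intros; apply is_derive_unique; now apply fS_der. Qed.

Lemma fS_ex s u : 0 <= s -> ex_derive (fS s) u.
Proof. intros Hs. exists (fS (s+1) u). now apply fS_der. Qed.

Lemma fS_0 s : fS s 0 = rgamma (s + 1).
Proof. unfold fS. rewrite PSeries_0. unfold cS. simpl. rewrite Rplus_0_r. field. Qed.

Lemma fS_pos s u : 0 <= s -> 0 <= u -> 0 < fS s u.
Proof.
intros Hs Hu.
assert (Hex : ex_series (fun k => cS s k * u ^ k)).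
{ destruct (CV_radius_inside (cS s) u (cS_in s u Hs)) as [l Hl]. exists l.
  eapply is_series_ext; [|exact Hl]. intros n. simpl. rewrite pow_n_pow. change (scal ?a ?b) with (a * b). ring. }
assert (H := sum_le_Series (fun k => cS s k * u ^ k) 0 (fun k => Rmult_le_pos _ _ (cS_nonneg s k Hs) (pow_le _ k Hu)) Hex).
rewrite sum_O in H. unfold fS, PSeries.
eapply Rlt_le_trans; [|exact H]. simpl. unfold cS. simpl. rewrite Rplus_0_r.
rewrite Rmult_1_r. unfold Rdiv. rewrite Rinv_1, Rmult_1_r. apply rgamma_pos. lra.
Qed.

Lemma fS_rec s u : 0 <= s -> fS s u = (s + 1) * fS (s + 1) u + u * fS (s + 2) u.
Proof.
intros Hs. unfold fS.
rewrite <- PSeries_scal, <- PSeries_incr_1.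
rewrite <- PSeries_plus.
2: { apply CV_radius_inside. unfold PS_scal. rewrite (CV_radius_ext _ (fun n => scal (s + 1) (cS (s + 1) n))) by reflexivity.
     change (fun n => scal (s + 1) (cS (s + 1) n)) with (PS_scal (s + 1) (cS (s + 1))).
     rewrite CV_radius_scal by lra. apply cS_in. lra. }
2: { apply CV_radius_inside. rewrite CV_radius_incr_1. apply cS_in. lra. }
apply PSeries_ext. intros n. unfold PS_plus, PS_scal, PS_incr_1. change (plus ?a ?b) with (a + b). change (scal ?a ?b) with (a * b).
destruct n.
- unfold cS. simpl. change (@zero R_NormedModule) with 0. rewrite !Rplus_0_r.
  replace (s + 1 + 1) with ((s + 1) + 1) by ring.
  rewrite (rgamma_rec (s + 1)) by lra. field.
- unfold cS. rewrite fact_simpl, mult_INR, !S_INR.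
  assert (0 < INR (fact n)) by apply INR_fact_pos.
  assert (0 <= INR n) by apply pos_INR.
  replace (s + 1 + (INR n + 1) + 1) with (s + 2 + INR n + 1) by ring.
  replace (s + (INR n + 1) + 1) with (s + INR n + 2) by ring.
  replace (s + 2 + INR n + 1) with ((s + INR n + 2) + 1) by ring.
  rewrite (rgamma_rec (s + INR n + 2)) by lra.
  field. lra.
Qed.

Ltac req := match goal with |- ?a = ?b => change (@eq R a b) end.

Lemma der_Phi_gen (f g : R -> R) (df dg c u : R) :
  is_derive f u df -> is_derive g u dg ->
  is_derive (fun v => f v * f v - c * f v * g v - v * g v * g v) u
    (2 * f u * df - c * (df * g u + f u * dg) - g u * g u - 2 * u * g u * dg).
Proof.
intros Hf Hg.
assert (Xf : ex_derive f u) by (exists df; exact Hf).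
assert (Xg : ex_derive g u) by (exists dg; exact Hg).
auto_derive.
- repeat split; auto.
- assert (Ef : Derive (fun x => f x) u = df) by (apply is_derive_unique; exact Hf).
  assert (Eg : Derive (fun x => g x) u = dg) by (apply is_derive_unique; exact Hg).
  rewrite Ef, Eg. ring.
Qed.

Lemma der_Lam_gen (f g : R -> R) (df dg c u : R) :
  is_derive f u df -> is_derive g u dg ->
  is_derive (fun v => (c - 2 * v) * f v * f v + (2 * c + 1) * v * f v * g v + 2 * v * v * g v * g v) u
    (-2 * f u * f u + (c - 2 * u) * 2 * f u * df + (2 * c + 1) * (f u * g u + u * df * g u + u * f u * dg)
      + 4 * u * g u * g u + 4 * u * u * g u * dg).
Proof.
intros Hf Hg.
assert (Xf : ex_derive f u) by (exists df; exact Hf).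
assert (Xg : ex_derive g u) by (exists dg; exact Hg).
auto_derive.
- repeat split; auto.
- assert (Ef : Derive (fun x => f x) u = df) by (apply is_derive_unique; exact Hf).
  assert (Eg : Derive (fun x => g x) u = dg) by (apply is_derive_unique; exact Hg).
  rewrite Ef, Eg. ring.
Qed.

Lemma der_psi_gen (P : R -> R) (dP c v : R) :
  0 < v -> is_derive P v dP ->
  is_derive (fun w => exp (c * ln w) * P w) v (exp (c * ln v) * (c / v * P v + dP)).
Proof.
intros Hv HP.
assert (XP : ex_derive P v) by (exists dP; exact HP).
auto_derive.
- repeat split; auto.
- assert (EP : Derive (fun x => P x) v = dP) by (apply is_derive_unique; exact HP).
  rewrite EP. change RinvImpl.Rinv with Rinv. field. lra.
Qed.

Section S.
Variable mu : R.
Hypothesis Hmu : 0 <= mu.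

Definition FF u := fS (mu + 1) u.
Definition GG u := fS (mu + 2) u.
Definition WW u := fS (mu + 3) u.

Lemma FF_der u : is_derive FF u (GG u).
Proof. unfold FF, GG. replace (mu + 2) with (mu + 1 + 1) by ring. apply fS_der. lra. Qed.
Lemma GG_der u : is_derive GG u (WW u).
Proof. unfold WW, GG. replace (mu + 3) with (mu + 2 + 1) by ring. apply fS_der. lra. Qed.

Lemma FF_rec u : FF u = (mu + 2) * GG u + u * WW u.
Proof.
unfold FF, GG, WW. rewrite (fS_rec (mu + 1)) by lra.
replace (mu + 1 + 1) with (mu + 2) by ring. replace (mu + 1 + 2) with (mu + 3) by ring. ring.
Qed.

Definition Phi u := FF u * FF u - (mu + 1) * FF u * GG u - u * GG u * GG u.
Definition Phi' u := 2 * FF u * GG u - (mu + 1) * (GG u * GG u + FF u * WW u) - GG u * GG u - 2 * u * GG u * WW u.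

Lemma Phi_der u : is_derive Phi u (Phi' u).
Proof.
unfold Phi, Phi'.
apply der_Phi_gen; [apply FF_der|apply GG_der].
Qed.



Definition Lam u := (mu + 1 - 2 * u) * FF u * FF u + (2 * (mu + 1) + 1) * u * FF u * GG u + 2 * u * u * GG u * GG u.
Definition Lam' u := -2 * FF u * FF u + (mu + 1 - 2 * u) * 2 * FF u * GG u
   + (2 * (mu + 1) + 1) * (FF u * GG u + u * GG u * GG u + u * FF u * WW u)
   + 4 * u * GG u * GG u + 4 * u * u * GG u * WW u.

Lemma Lam_der u : is_derive Lam u (Lam' u).
Proof. unfold Lam, Lam'. apply der_Lam_gen; [apply FF_der|apply GG_der]. Qed.

Lemma Lam'_eq u : Lam' u = (2 * (mu + 1) - 1) * Phi u.
Proof.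
assert (HX := FF_rec u).
assert (E : Lam' u - (2 * (mu + 1) - 1) * Phi u
   = ((2 * (mu + 1) + 1) * FF u + 4 * u * GG u) * (u * WW u - (FF u - (mu + 2) * GG u))).
{ unfold Lam', Phi. ring. }
assert (Z : u * WW u - (FF u - (mu + 2) * GG u) = 0) by (rewrite HX; ring).
rewrite Z, Rmult_0_r in E.
lra.
Qed.

Lemma Phi'_eq u : u * Phi' u + (mu + 1) * Phi u = u * GG u * GG u + (mu + 1) * FF u * GG u.
Proof.
assert (HX := FF_rec u).
assert (E : u * Phi' u + (mu + 1) * Phi u - (u * GG u * GG u + (mu + 1) * FF u * GG u)
   = (- (mu + 1) * FF u - 2 * u * GG u) * (u * WW u - (FF u - (mu + 2) * GG u))).
{ unfold Phi', Phi. ring. }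
assert (Z : u * WW u - (FF u - (mu + 2) * GG u) = 0) by (rewrite HX; ring).
rewrite Z, Rmult_0_r in E.
lra.
Qed.

Lemma FF_pos u : 0 <= u -> 0 < FF u.
Proof. intros; unfold FF; apply fS_pos; lra. Qed.
Lemma GG_pos u : 0 <= u -> 0 < GG u.
Proof. intros; unfold GG; apply fS_pos; lra. Qed.

Lemma Phi_0 : 0 < Phi 0.
Proof.
unfold Phi, FF, GG. rewrite !fS_0.
replace (mu + 1 + 1) with (mu + 2) by ring. replace (mu + 2 + 1) with (mu + 3) by ring.
rewrite (rgamma_rec (mu + 2)) by lra. replace (mu + 2 + 1) with (mu + 3) by ring.
assert (0 < rgamma (mu + 3)) by (apply rgamma_pos; lra).
replace ((mu + 2) * rgamma (mu + 3) * ((mu + 2) * rgamma (mu + 3)) -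
   (mu + 1) * ((mu + 2) * rgamma (mu + 3)) * rgamma (mu + 3) - 0 * rgamma (mu + 3) * rgamma (mu + 3))
  with ((mu + 2) * (rgamma (mu + 3) * rgamma (mu + 3))) by ring.
apply Rmult_lt_0_compat; [lra|]. apply Rmult_lt_0_compat; lra.
Qed.

Lemma Phi_pos u : 0 <= u -> 0 < Phi u.
Proof.
intros [Hu|Hu]; [|subst; apply Phi_0].
apply Rnot_le_lt. intros Hneg.
set (psi := fun w => exp ((mu + 1) * ln w) * Phi w).
set (psi' := fun w => exp ((mu + 1) * ln w) * ((mu + 1) / w * Phi w + Phi' w)).
assert (Hcont : continuous Phi 0).
{ apply (ex_derive_continuous Phi). exists (Phi' 0). apply Phi_der. }
destruct (Hcont (fun z => Rabs (z - Phi 0) < Phi 0)) as [del Hdel].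
{ exists (mkposreal _ Phi_0). intros z Hz. exact Hz. }
set (e := Rmin del u / 2).
assert (Hmin : 0 < Rmin del u) by (apply Rmin_glb_lt; [apply cond_pos|lra]).
assert (He0 : 0 < e) by (unfold e; lra).
assert (Heu : e < u) by (unfold e; generalize (Rmin_r del u); lra).
assert (Hed : e < del) by (unfold e; generalize (Rmin_l del u); lra).
assert (HPe : 0 < Phi e).
{ assert (H := Hdel e). assert (Hb : ball 0 del e).
  { change (Rabs (e - 0) < del). rewrite Rminus_0_r, Rabs_pos_eq; lra. }
  specialize (H Hb). change (Rabs (Phi e - Phi 0) < Phi 0) in H. apply Rabs_def2 in H. lra. }
destruct (MVT_cor2 psi psi' e u Heu) as [c [Hc Hcin]].
{ intros c Hc. apply is_derive_Reals. unfold psi, psi'. apply der_psi_gen; [lra|apply Phi_der]. }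
assert (Hpc : 0 < psi' c).
{ unfold psi'. apply Rmult_lt_0_compat; [apply exp_pos|].
  assert (Hc0 : 0 < c) by lra.
  assert (E : (mu + 1) / c * Phi c + Phi' c = (c * GG c * GG c + (mu + 1) * FF c * GG c) / c).
  { rewrite <- Phi'_eq. field. lra. }
  rewrite E. apply Rdiv_lt_0_compat; auto.
  assert (0 < FF c) by (apply FF_pos; lra). assert (0 < GG c) by (apply GG_pos; lra).
  assert (0 < c * GG c * GG c) by (repeat apply Rmult_lt_0_compat; auto).
  assert (0 < (mu + 1) * FF c * GG c) by (repeat apply Rmult_lt_0_compat; auto; lra).
  lra. }
assert (psi u - psi e > 0) by (rewrite Hc; apply Rmult_lt_0_compat; lra).
unfold psi in H.
assert (Hx1 := exp_pos ((mu + 1) * ln u)). assert (Hx2 := exp_pos ((mu + 1) * ln e)).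
assert (exp ((mu + 1) * ln u) * Phi u <= 0).
{ rewrite <- (Rmult_0_r (exp ((mu + 1) * ln u))). apply Rmult_le_compat_l; lra. }
assert (0 < exp ((mu + 1) * ln e) * Phi e) by (apply Rmult_lt_0_compat; auto).
lra.
Qed.

Lemma Lam_pos u : 0 <= u -> 0 < Lam u.
Proof.
intros Hu.
assert (HL0 : 0 < Lam 0).
{ unfold Lam. assert (0 < FF 0) by (apply FF_pos; lra).
  replace ((mu + 1 - 2 * 0) * FF 0 * FF 0 + (2 * (mu + 1) + 1) * 0 * FF 0 * GG 0 + 2 * 0 * 0 * GG 0 * GG 0)
    with ((mu + 1) * (FF 0 * FF 0)) by ring.
  apply Rmult_lt_0_compat; [lra|]. apply Rmult_lt_0_compat; lra. }
destruct Hu as [Hu|Hu]; [|subst; exact HL0].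
destruct (MVT_cor2 Lam Lam' 0 u Hu) as [c [Hc Hcin]].
{ intros c _. apply is_derive_Reals. apply Lam_der. }
rewrite Lam'_eq in Hc.
assert (0 < Phi c) by (apply Phi_pos; lra).
assert (0 <= (2 * (mu + 1) - 1) * Phi c * (u - 0)) by (repeat apply Rmult_le_pos; lra).
lra.
Qed.

End S.


Definition pco (mu y : R) (k : nat) := Pk mu y k / INR (fact k).
Definition Qs (mu y x : R) := exp (- x) * PSeries (pco mu y) x.

Lemma pco_radius mu y : 0 <= mu -> 0 < y -> CV_radius (pco mu y) = p_infty.
Proof.
intros Hmu Hy.
apply (radius_fact _ (Pk mu y 0 + exp (- y) * Rpower y mu * rgamma (mu + 1) * exp y)).
intros k. unfold pco. rewrite Rabs_pos_eq.
- apply Rmult_le_compat_r; [left; apply Rinv_0_lt_compat; apply INR_fact_pos|]. apply Pk_bound; auto.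
- apply Rdiv_le_0_compat; [apply Pk_nonneg; auto|apply INR_fact_pos].
Qed.

Lemma Marcum_Qs mu x y : 0 <= mu -> 0 <= x -> 0 < y -> MarcumQ mu x y = Qs mu y x.
Proof.
intros Hmu [Hx|Hx] Hy.
- rewrite Marcum_series by auto. unfold Qs, PSeries. f_equal. apply Series_ext. intros k. unfold pco. field.
  apply not_0_INR, fact_neq_0.
- subst. unfold MarcumQ. destruct (Rlt_dec 0 0); [lra|].
  unfold Qs. rewrite PSeries_0, Ropp_0, exp_0. unfold pco, Pk. simpl. rewrite Rplus_0_r. field.
Qed.

Lemma ex_series_of_pseries (a : nat -> R) x :
  Rbar_lt (Rabs x) (CV_radius a) -> ex_series (fun k => a k * x ^ k).
Proof.
intros H. destruct (CV_radius_inside a x H) as [l Hl]. exists l.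
eapply is_series_ext; [|exact Hl]. intros n. simpl. rewrite pow_n_pow. change (scal ?a ?b) with (a * b). ring.
Qed.

Lemma D1_series mu y x : 0 <= mu -> 0 < y ->
  PSeries (PS_derive (pco mu y)) x - PSeries (pco mu y) x = exp (- y) * Rpower y mu * fS mu (x * y).
Proof.
intros Hmu Hy.
assert (Hr : forall z, Rbar_lt (Rabs z) (CV_radius (pco mu y))) by (intros; rewrite pco_radius; simpl; auto).
assert (Hr' : forall z, Rbar_lt (Rabs z) (CV_radius (PS_derive (pco mu y)))) by (intros; rewrite CV_radius_derive; auto).
unfold PSeries. rewrite <- Series_minus by (apply ex_series_of_pseries; auto).
unfold fS, PSeries. rewrite <- Series_scal_l. apply Series_ext. intros k.
unfold PS_derive, pco, cS. rewrite Pk_rec by auto.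
rewrite fact_simpl, mult_INR. rewrite Rpower_plus, Rpower_pow by lra.
rewrite Rpow_mult_distr.
assert (0 < INR (fact k)) by apply INR_fact_pos.
assert (0 < INR (S k)) by (apply lt_0_INR; lia).
field. lra.
Qed.

Lemma der_D1_gen (f : R -> R) (df : R -> R) (K y x : R) :
  (forall z, is_derive f z (df z)) ->
  is_derive (fun x => exp (- x) * K * f (x * y)) x (exp (- x) * K * (y * df (x * y) - f (x * y))).
Proof.
intros Hf.
assert (Xf : ex_derive f (x * y)) by (exists (df (x * y)); apply Hf).
auto_derive.
- repeat split; auto.
- assert (Ef : Derive (fun z => f z) (x * y) = df (x * y)) by (apply is_derive_unique; apply Hf).
  rewrite Ef. ring.
Qed.

Lemma derive_nonneg_of (f g : R -> R) x l :
  0 <= x -> (forall z, 0 <= z -> f z = g z) -> is_derive g x l -> is_derive_nonneg f x l.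
Proof.
intros Hx Hfg Hd.
apply is_derive_Reals in Hd.
intros P [eps HP].
destruct (Hd eps (cond_pos eps)) as [del Hdel].
exists del. intros h Hh [Hh0 Hxh]. apply HP.
change (Rabs ((f (x + h) - f x) / h - l) < eps).
rewrite !Hfg by lra.
apply Hdel; auto. change (Rabs (h - 0) < del) in Hh. rewrite Rminus_0_r in Hh. exact Hh.
Qed.

Lemma id_ii d F G x y : (d - 2 * (x * y)) * F * F + (2 * d + 1) * (x * y) * F * G + 2 * (x * y) * (x * y) * G * G
   = 2 * ((d * F + x * y * G - y * F) * (d * F + x * y * G + y * F - (d - 1 / 2) * F) - (x - (y - (d - 1 / 2))) * (y * F * F)).
Proof. field. Qed.

Lemma id_iii d F G x y : - (x * y) * (F * F - d * F * G - x * y * G * G)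
   = (d * F + x * y * G - y * F) * (d * F + x * y * G + y * F - d * F) + (y - d - x) * (y * F * F).
Proof. ring. Qed.

Theorem theorem1 (mu y : R) (hmu : 0 <= mu) (hy : 0 < y) :
  exists D1 D2 : R -> R,
    (forall x, 0 <= x -> is_derive_nonneg (fun s => MarcumQ mu s y) x (D1 x)) /\
    (forall x, 0 <= x -> is_derive_nonneg D1 x (D2 x)) /\
    (y <= mu + 1 ->
       forall x, 0 <= x -> D2 x <= 0 /\ (D2 x = 0 <-> (x = 0 /\ y = mu + 1))) /\
    (forall x, 0 <= x -> y - mu - 1 / 2 < x -> D2 x < 0) /\
    (forall x, 0 <= x -> x < y - mu - 1 -> 0 < D2 x).
Proof.
set (K := exp (- y) * Rpower y mu).
assert (HK : 0 < K) by (unfold K; apply Rmult_lt_0_compat; [apply exp_pos|unfold Rpower; apply exp_pos]).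
set (D1 := fun x => exp (- x) * K * fS mu (x * y)).
set (D2 := fun x => exp (- x) * K * (y * fS (mu + 1) (x * y) - fS mu (x * y))).
assert (HD1 : forall x, is_derive (Qs mu y) x (D1 x)).
{ intros x. unfold Qs, D1.
  assert (Hr : Rbar_lt (Rabs x) (CV_radius (pco mu y))) by (rewrite pco_radius; simpl; auto).
  assert (H := is_derive_PSeries _ _ Hr).
  assert (He : is_derive (fun x => exp (- x)) x (- exp (- x))).
  { auto_derive; auto. ring. }
  assert (Hm := is_derive_mult _ _ x _ _ He H (fun a b => Rmult_comm a b)).
  replace (exp (- x) * K * fS mu (x * y)) with (- exp (- x) * PSeries (pco mu y) x + exp (- x) * PSeries (PS_derive (pco mu y)) x).
  { exact Hm. }
  transitivity (exp (- x) * (PSeries (PS_derive (pco mu y)) x - PSeries (pco mu y) x)).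
  { req. ring. }
  rewrite (D1_series mu y x) by auto. unfold K. req. ring. }
assert (HD2 : forall x, is_derive D1 x (D2 x)).
{ intros x. unfold D1, D2. apply (der_D1_gen (fS mu) (fS (mu + 1)) K y x).
  intros z. apply fS_der. exact hmu. }
exists D1, D2.
assert (Hsign : forall x, 0 <= x ->
   D2 x = exp (- x) * K * (y * FF mu (x * y) - ((mu + 1) * FF mu (x * y) + (x * y) * GG mu (x * y)))).
{ intros x Hx. unfold D2, FF, GG. rewrite (fS_rec mu) by exact hmu. replace (mu + 2) with (mu + 1 + 1) by ring. reflexivity. }
assert (HA : forall x, 0 < exp (- x) * K) by (intros; apply Rmult_lt_0_compat; [apply exp_pos|exact HK]).
split; [|split; [|split; [|split]]].
- intros x Hx. apply (derive_nonneg_of _ (Qs mu y)); auto.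
  intros z Hz. apply Marcum_Qs; auto.
- intros x Hx. apply (derive_nonneg_of _ D1); auto.
- intros Hyd x Hx. rewrite Hsign by auto.
  assert (Hu : 0 <= x * y) by nra.
  assert (HF := FF_pos mu hmu (x * y) Hu). assert (HG := GG_pos mu hmu (x * y) Hu).
  set (F := FF mu (x * y)) in *. set (G := GG mu (x * y)) in *. specialize (HA x). set (A := exp (- x) * K) in *.
  assert (HS : y * F - ((mu + 1) * F + x * y * G) = (y - (mu + 1)) * F - x * y * G) by ring.
  rewrite HS.
  assert (H1 : (y - (mu + 1)) * F <= 0) by nra.
  assert (H2 : 0 <= x * y * G) by nra.
  split.
  + assert (0 <= A * (x * y * G - (y - (mu + 1)) * F)) by (apply Rmult_le_pos; lra).
    replace (A * ((y - (mu + 1)) * F - x * y * G)) with (- (A * (x * y * G - (y - (mu + 1)) * F))) by ring. lra.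
  + split.
    * intros HD0. apply Rmult_integral in HD0. destruct HD0 as [HA0|HS0]; [lra|].
      assert (E1 : (y - (mu + 1)) * F = 0) by lra.
      assert (E2 : x * y * G = 0) by lra.
      apply Rmult_integral in E1. destruct E1 as [E1|E1]; [|lra].
      apply Rmult_integral in E2. destruct E2 as [E2|E2]; [|lra].
      apply Rmult_integral in E2. destruct E2 as [E2|E2]; [|lra].
      split; lra.
    * intros [-> ->]. ring.
- intros x Hx Hxy. rewrite Hsign by auto.
  assert (Hu : 0 <= x * y) by nra.
  assert (HF := FF_pos mu hmu (x * y) Hu). assert (HG := GG_pos mu hmu (x * y) Hu).
  assert (HL := Lam_pos mu hmu (x * y) Hu). unfold Lam in HL.
  set (F := FF mu (x * y)) in *. set (G := GG mu (x * y)) in *. specialize (HA x). set (A := exp (- x) * K) in *.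
  set (d := mu + 1) in *. set (H := d * F + x * y * G). set (c := d - 1 / 2).
  assert (Hid : (d - 2 * (x * y)) * F * F + (2 * d + 1) * (x * y) * F * G + 2 * (x * y) * (x * y) * G * G
     = 2 * ((H - y * F) * (H + y * F - c * F) - (x - (y - c)) * (y * F * F))).
  { unfold H, c. apply id_ii. }
  assert (HS : y * F - (d * F + x * y * G) < 0).
  { apply Rnot_le_lt. intros Hge. fold H in Hge.
    assert (HdH : d * F <= H) by (unfold H; nra).
    assert (P1 : (H - y * F) * (H + y * F - c * F) <= 0).
    { apply Rmult_le_0_r; [lra|]. unfold c. nra. }
    assert (P2 : 0 < (x - (y - c)) * (y * F * F)).
    { apply Rmult_lt_0_compat; [unfold c, d in *; lra|]. apply Rmult_lt_0_compat; nra. }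
    lra. }
  assert (Hpos : 0 < A * (- (y * F - (d * F + x * y * G)))) by (apply Rmult_lt_0_compat; lra).
  assert (Er : A * (y * F - (d * F + x * y * G)) = - (A * (- (y * F - (d * F + x * y * G))))) by (clearbody F G A d H c; ring).
  unfold H. rewrite Er. lra.
- intros x Hx Hxy. rewrite Hsign by auto.
  assert (Hu : 0 <= x * y) by nra.
  assert (HF := FF_pos mu hmu (x * y) Hu). assert (HG := GG_pos mu hmu (x * y) Hu).
  assert (HP := Phi_pos mu hmu (x * y) Hu). unfold Phi in HP.
  set (F := FF mu (x * y)) in *. set (G := GG mu (x * y)) in *. specialize (HA x). set (A := exp (- x) * K) in *.
  set (d := mu + 1) in *. set (H := d * F + x * y * G).
  assert (Hid : - (x * y) * (F * F - d * F * G - x * y * G * G)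
     = (H - y * F) * (H + y * F - d * F) + (y - d - x) * (y * F * F)).
  { unfold H. apply id_iii. }
  assert (HS : 0 < y * F - (d * F + x * y * G)).
  { apply Rnot_le_lt. intros Hle. fold H in Hle.
    assert (HdH : d * F <= H) by (unfold H; nra).
    assert (P1 : 0 <= (H - y * F) * (H + y * F - d * F)).
    { apply Rmult_le_pos; [lra|]. unfold d in *. nra. }
    assert (P2 : 0 < (y - d - x) * (y * F * F)).
    { apply Rmult_lt_0_compat; [unfold d in *; lra|]. apply Rmult_lt_0_compat; nra. }
    assert (P3 : 0 <= x * y * (F * F - d * F * G - x * y * G * G)) by (apply Rmult_le_pos; lra).
    lra. }
  apply Rmult_lt_0_compat; auto.
Qed.
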